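(* For every $\beta\in[\frac12,1)$ and every integer $k\ge2$, $$Q^{-1}(k,\beta)\le\frac{k}{k+1}\,Q^{-1}(k+1,\beta).$$
   Context: For an integer $k\ge1$ and $\lambda\ge0$, $Q(k,\lambda)=\Gamma(k,\lambda)/\Gamma(k)=\mathbb{P}(\operatorname{Poi}(\lambda)\le k-1)$ (regularized upper incomplete gamma function); $Q(k,\cdot)$ decreases strictly from $1$ to $0$, and for $\beta\in(0,1)$, $Q^{-1}(k,\beta)$ is the unique $\lambda>0$ with $Q(k,\lambda)=\beta$. *)

(* Defs.v *)
From Stdlib Require Import Arith Reals Lra ClassicalEpsilon.
Open Scope R_scope.

(* Q(k, lam) = P(Poi(lam) <= k-1) = sum_{j=0}^{k-1} e^{-lam} lam^j / j!
   (the regularized upper incomplete gamma function Gamma(k,lam)/Gamma(k),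
   for integer k >= 1). *)
Fixpoint Qsum (k : nat) (lam : R) : R :=
  match k with
  | O => 0
  | S j => Qsum j lam + lam ^ j / INR (fact j)
  end.

Definition Q (k : nat) (lam : R) : R := exp (- lam) * Qsum k lam.

Definition Qinv (k : nat) (beta : R) : R :=
  epsilon (inhabits 0) (fun lam => 0 < lam /\ Q k lam = beta).

(* Main.v *)
Require Import Defs.
From Stdlib Require Import Reals.
From Stdlib Require Import Arith Reals Lra Lia Psatz ClassicalEpsilon.
From Coquelicot Require Import Coquelicot.
Open Scope R_scope.

Lemma fact_pos' n : 0 < INR (fact n).
Proof. apply lt_0_INR, lt_O_fact. Qed.

Lemma dplus (f g : R -> R) (x a b : R) : is_derive f x a -> is_derive g x b ->
  is_derive (fun t => f t + g t) x (a + b).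
Proof. intros Ha Hb. exact (is_derive_plus f g x a b Ha Hb). Qed.
Lemma dmult (f g : R -> R) (x a b : R) : is_derive f x a -> is_derive g x b ->
  is_derive (fun t => f t * g t) x (a * g x + f x * b).
Proof. intros Ha Hb. exact (is_derive_mult f g x a b Ha Hb (fun _ _ => Rmult_comm _ _)). Qed.
Lemma dcomp (f g : R -> R) (x a b : R) : is_derive g x a -> is_derive f (g x) b ->
  is_derive (fun t => f (g t)) x (b * a).
Proof. intros Ha Hb. rewrite Rmult_comm. exact (is_derive_comp f g x b a Hb Ha). Qed.
Lemma dext (f g : R -> R) (x a b : R) : (forall t, f t = g t) -> a = b -> is_derive f x a -> is_derive g x b.
Proof. intros H -> Hd. exact (is_derive_ext f g x b H Hd). Qed.

Lemma Qsum_deriv N x : is_derive (Qsum (S N)) x (Qsum N x).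
Proof.
  induction N.
  - simpl. apply (is_derive_ext (fun _ => 1)).
    + intros t; simpl; field.
    + auto_derive; auto.
  - change (Qsum (S (S N))) with (fun x => Qsum (S N) x + x ^ (S N) / INR (fact (S N))).
    replace (Qsum (S N) x) with (Qsum N x + x ^ N / INR (fact N)) by reflexivity.
    apply dplus; auto.
    auto_derive; [ pose proof (fact_pos' (S N)); lra |].
    change (match N with 0%nat => 1 | S _ => INR N + 1 end) with (INR (S N)).
    change (fact N + N * fact N)%nat with (fact (S N)).
    rewrite fact_simpl, mult_INR.
    pose proof (fact_pos' N). pose proof (pos_INR N). rewrite S_INR. field. split; lra.
Qed.

Lemma Q_deriv N x : is_derive (Q (S N)) x (- exp (- x) * (x ^ N / INR (fact N))).
Proof.
  unfold Q.
  eapply dext; [intros; reflexivity| |].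
  2: { apply dmult. 2: apply Qsum_deriv. auto_derive; auto. }
  simpl. ring.
Qed.

Lemma der_cont (f df : R -> R) x : is_derive f x (df x) -> continuity_pt f x.
Proof.
  intros H. apply continuity_pt_filterlim.
  apply (ex_derive_continuous f x). exists (df x). exact H.
Qed.

Lemma mono_le (f df : R -> R) a b : a <= b ->
  (forall x, a <= x <= b -> is_derive f x (df x)) ->
  (forall x, a <= x <= b -> 0 <= df x) -> f a <= f b.
Proof.
  intros Hab Hd Hp.
  destruct (MVT_gen f a b df) as [c [Hc E]].
  - intros x Hx. apply Hd. rewrite Rmin_left, Rmax_right in Hx; lra.
  - intros x Hx. apply (der_cont f df). apply Hd. rewrite Rmin_left, Rmax_right in Hx; lra.
  - rewrite Rmin_left, Rmax_right in Hc by lra.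
    assert (0 <= df c * (b - a)) by (apply Rmult_le_pos; [apply Hp; lra | lra]). lra.
Qed.

Lemma mono_lt (f df : R -> R) a b : a < b ->
  (forall x, a <= x <= b -> is_derive f x (df x)) ->
  (forall x, a <= x <= b -> 0 < df x) -> f a < f b.
Proof.
  intros Hab Hd Hp.
  destruct (MVT_gen f a b df) as [c [Hc E]].
  - intros x Hx. apply Hd. rewrite Rmin_left, Rmax_right in Hx; lra.
  - intros x Hx. apply (der_cont f df). apply Hd. rewrite Rmin_left, Rmax_right in Hx; lra.
  - rewrite Rmin_left, Rmax_right in Hc by lra.
    assert (0 < df c * (b - a)) by (apply Rmult_lt_0_compat; [apply Hp; lra | lra]). lra.
Qed.

Lemma Qsum0 N : Qsum (S N) 0 = 1.
Proof. induction N. simpl; field. change (Qsum (S N) 0 + 0 ^ (S N) / INR (fact (S N)) = 1). rewrite IHN. rewrite pow_ne_zero by lia. unfold Rdiv. ring. Qed.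

Lemma Q0 N : Q (S N) 0 = 1.
Proof. unfold Q. rewrite Qsum0, Ropp_0, exp_0. ring. Qed.

Lemma Q_nonincr N a b : 0 <= a <= b -> Q (S N) b <= Q (S N) a.
Proof.
  intros H.
  assert (- Q (S N) a <= - Q (S N) b); [|lra].
  apply (mono_le (fun x => - Q (S N) x) (fun x => exp (- x) * (x ^ N / INR (fact N)))); [lra| |].
  - intros x _. eapply dext; [intros; reflexivity| |].
    2: { apply (is_derive_opp (Q (S N))). apply Q_deriv. }
    simpl. unfold opp; simpl. ring.
  - intros x Hx. apply Rmult_le_pos; [left; apply exp_pos|].
    apply Rmult_le_pos; [apply pow_le; lra | left; apply Rinv_0_lt_compat, fact_pos'].
Qed.

Lemma Q_decr N a b : 0 < a < b -> Q (S N) b < Q (S N) a.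
Proof.
  intros H.
  assert (- Q (S N) a < - Q (S N) b); [|lra].
  apply (mono_lt (fun x => - Q (S N) x) (fun x => exp (- x) * (x ^ N / INR (fact N)))); [lra| |].
  - intros x _. eapply dext; [intros; reflexivity| |].
    2: { apply (is_derive_opp (Q (S N))). apply Q_deriv. }
    simpl. unfold opp; simpl. ring.
  - intros x Hx. apply Rmult_lt_0_compat; [apply exp_pos|].
    apply Rmult_lt_0_compat; [apply pow_lt; lra | apply Rinv_0_lt_compat, fact_pos'].
Qed.

Lemma exp_ge_Qsum N x : 0 <= x -> Qsum N x <= exp x.
Proof.
  revert x. induction N; intros x Hx.
  - simpl. left; apply exp_pos.
  - assert (0 <= exp x - Qsum (S N) x); [|lra].
    replace 0 with (exp 0 - Qsum (S N) 0) by (rewrite Qsum0, exp_0; ring).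
    apply (mono_le (fun t => exp t - Qsum (S N) t) (fun t => exp t - Qsum N t)); [lra| |].
    + intros t _. eapply dext; [intros; reflexivity| |].
      2: { apply dplus. apply is_derive_exp. apply (is_derive_opp (Qsum (S N))). apply Qsum_deriv. }
      unfold opp; simpl. ring.
    + intros t Ht. specialize (IHN t ltac:(lra)). lra.
Qed.

Lemma exp_gt_Qsum N x : 0 < x -> Qsum N x < exp x.
Proof.
  intros Hx. apply Rlt_le_trans with (Qsum (S N) x); [|apply exp_ge_Qsum; lra].
  simpl. assert (0 < x ^ N / INR (fact N)); [|lra].
  apply Rmult_lt_0_compat; [apply pow_lt; lra | apply Rinv_0_lt_compat, fact_pos'].
Qed.

Fixpoint sm (m : nat) (f : nat -> R) : R :=
  match m with O => 0 | S j => sm j f + f j end.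

Lemma Qsum_sm n x : Qsum n x = sm n (fun j => x ^ j / INR (fact j)).
Proof. induction n; simpl; auto. rewrite IHn. reflexivity. Qed.

Lemma sm_split n m g : sm (n + m) g = sm n g + sm m (fun j => g (n + j)%nat).
Proof.
  induction m; simpl. rewrite Nat.add_0_r. ring.
  rewrite Nat.add_succ_r. simpl. rewrite IHm. ring.
Qed.

Lemma sm_shift n g : sm (S n) g = g O + sm n (fun j => g (S j)).
Proof.
  induction n. simpl. ring.
  change (sm (S (S n)) g) with (sm (S n) g + g (S n)). rewrite IHn. simpl. ring.
Qed.

Lemma sm_rev_le n (f g : nat -> R) :
  (forall j, (j < n)%nat -> f j <= g (n - 1 - j)%nat) -> sm n f <= sm n g.
Proof.
  revert f g. induction n; intros f g H. simpl; lra.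
  rewrite (sm_shift n g). simpl sm.
  assert (sm n f <= sm n (fun j => g (S j))).
  { apply IHn. intros j Hj. replace (S (n - 1 - j)) with (S n - 1 - j)%nat by lia. apply H. lia. }
  assert (f n <= g O). { replace O with (S n - 1 - n)%nat by lia. apply H. lia. }
  lra.
Qed.

Lemma fact_bound n j : (j < n)%nat -> (fact (n + j) <= n ^ (2 * j + 1) * fact (n - 1 - j))%nat.
Proof.
  induction j; intros Hj.
  - rewrite Nat.add_0_r. replace (n - 1 - 0)%nat with (n - 1)%nat by lia.
    destruct n; [lia|]. simpl (S n - 1)%nat. rewrite Nat.sub_0_r. simpl. lia.
  - specialize (IHj ltac:(lia)).
    replace (n + S j)%nat with (S (n + j)) by lia. rewrite fact_simpl.
    replace (n - 1 - j)%nat with (S (n - 1 - S j)) in IHj by lia.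
    rewrite fact_simpl in IHj.
    replace (2 * S j + 1)%nat with (2 + (2 * j + 1))%nat by lia.
    rewrite Nat.pow_add_r.
    set (F := fact (n - 1 - S j)) in *. set (P := (n ^ (2 * j + 1))%nat) in *.
    assert (S (n + j) * S (n - 1 - S j) <= n ^ 2)%nat by (simpl; nia).
    nia.
Qed.

Lemma term_cmp n i : (i < n)%nat ->
  INR n ^ (n - 1 - i) / INR (fact (n - 1 - i)) <= INR n ^ (n + i) / INR (fact (n + i)).
Proof.
  intros Hi. pose proof (fact_bound n i Hi) as Hf.
  apply le_INR in Hf. rewrite mult_INR, pow_INR in Hf.
  replace (n + i)%nat with ((n - 1 - i) + (2 * i + 1))%nat by lia.
  rewrite pow_add.
  replace ((n - 1 - i) + (2 * i + 1))%nat with (n + i)%nat by lia.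
  pose proof (fact_pos' (n - 1 - i)). pose proof (fact_pos' (n + i)).
  assert (0 <= INR n ^ (n - 1 - i)) by (apply pow_le, pos_INR).
  apply Rmult_le_reg_r with (INR (fact (n - 1 - i)) * INR (fact (n + i))).
  { apply Rmult_lt_0_compat; auto. }
  set (a := INR n ^ (n - 1 - i)) in *. set (b := INR n ^ (2 * i + 1)) in *.
  set (F1 := INR (fact (n - 1 - i))) in *. set (F2 := INR (fact (n + i))) in *.
  replace (a / F1 * (F1 * F2)) with (a * F2) by (field; lra).
  replace (a * b / F2 * (F1 * F2)) with (a * (b * F1)) by (field; lra).
  apply Rmult_le_compat_l; auto.
Qed.

Lemma two_Qsum n : 2 * Qsum n (INR n) <= Qsum (n + n) (INR n).
Proof.
  rewrite !Qsum_sm, sm_split.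
  assert (sm n (fun j => INR n ^ j / INR (fact j)) <=
          sm n (fun j => INR n ^ (n + j) / INR (fact (n + j)))); [|lra].
  apply sm_rev_le. intros j Hj.
  pose proof (term_cmp n (n - 1 - j) ltac:(lia)) as H.
  replace (n - 1 - (n - 1 - j))%nat with j in H by lia. exact H.
Qed.

Lemma Q_half N : Q (S N) (INR (S N)) < 1 / 2.
Proof.
  unfold Q. pose proof (two_Qsum (S N)).
  pose proof (exp_gt_Qsum (S N + S N) (INR (S N)) ltac:(apply lt_0_INR; lia)).
  assert (exp (- INR (S N)) * exp (INR (S N)) = 1) by (rewrite <- exp_plus; replace (- INR (S N) + INR (S N)) with 0 by ring; apply exp_0).
  pose proof (exp_pos (- INR (S N))). nra.
Qed.

Lemma exp_pow' a n : exp a ^ n = exp (INR n * a).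
Proof.
  induction n. simpl. rewrite Rmult_0_l, exp_0. reflexivity.
  rewrite S_INR. simpl. rewrite IHn, <- exp_plus. f_equal. ring.
Qed.

Lemma exp_ge_lin z : 1 + z <= exp z.
Proof.
  destruct (Req_dec z 0) as [->|H]. rewrite exp_0; lra. left; apply exp_ineq1; auto.
Qed.

Lemma ln_lb y : 0 <= y -> 2 * y / (2 + y) <= ln (1 + y).
Proof.
  intros Hy.
  assert (0 <= ln (1 + y) - 2 * y / (2 + y)); [|lra].
  replace 0 with (ln (1 + 0) - 2 * 0 / (2 + 0)) by (rewrite Rplus_0_r, ln_1; field).
  apply (mono_le (fun t => ln (1 + t) - 2 * t / (2 + t)) (fun t => t ^ 2 / ((1 + t) * (2 + t) ^ 2))); [lra| |].
  - intros t Ht. auto_derive. repeat split; lra. field. lra.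
  - intros t Ht. apply Rmult_le_pos. apply pow2_ge_0. left; apply Rinv_0_lt_compat.
    apply Rmult_lt_0_compat; [lra| apply pow_lt; lra].
Qed.

Lemma expm_ub y : 0 <= y -> exp (- y) <= 1 - y + y ^ 2 / 2.
Proof.
  intros Hy.
  assert (0 <= 1 - y + y ^ 2 / 2 - exp (- y)); [|lra].
  replace 0 with (1 - 0 + 0 ^ 2 / 2 - exp (- 0)) by (rewrite Ropp_0, exp_0; field).
  apply (mono_le (fun t => 1 - t + t ^ 2 / 2 - exp (- t)) (fun t => -1 + t + exp (- t))); [lra| |].
  - intros t Ht. auto_derive. auto. field.
  - intros t Ht. pose proof (exp_ge_lin (- t)). lra.
Qed.

Lemma expm_lb y : 0 <= y -> 1 - y + y ^ 2 / 2 - y ^ 3 / 6 <= exp (- y).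
Proof.
  intros Hy.
  assert (0 <= exp (- y) - (1 - y + y ^ 2 / 2 - y ^ 3 / 6)); [|lra].
  replace 0 with (exp (- 0) - (1 - 0 + 0 ^ 2 / 2 - 0 ^ 3 / 6)) by (rewrite Ropp_0, exp_0; field).
  apply (mono_le (fun t => exp (- t) - (1 - t + t ^ 2 / 2 - t ^ 3 / 6)) (fun t => 1 - t + t ^ 2 / 2 - exp (- t))); [lra| |].
  - intros t Ht. auto_derive. auto. field.
  - intros t Ht. pose proof (expm_ub t ltac:(lra)). lra.
Qed.

Lemma step_bound N x : 0 <= x ->
  exp (- (INR (S N) + x)) * (INR (S N) + x) ^ N <=
  exp (- INR (S N)) * INR (S N) ^ N * exp (- (x / INR (S N))).
Proof.
  intros Hx. set (k := INR (S N)).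
  assert (Hk : 0 < k) by (apply lt_0_INR; lia).
  assert (HN : INR N = k - 1) by (unfold k; rewrite S_INR; ring).
  replace (k + x) with (k * (1 + x / k)) by (field; lra).
  rewrite Rpow_mult_distr.
  assert (H1 : (1 + x / k) ^ N <= exp (x / k) ^ N).
  { apply pow_incr. split. assert (0 <= x / k) by (apply Rdiv_le_0_compat; lra). lra. apply exp_ge_lin. }
  rewrite exp_pow' in H1.
  assert (E : exp (- (k * (1 + x / k))) * exp (INR N * (x / k)) = exp (- k) * exp (- (x / k))).
  { rewrite <- !exp_plus. f_equal. rewrite HN. field. lra. }
  assert (0 <= k ^ N) by (apply pow_le; lra).
  pose proof (exp_pos (- (k * (1 + x / k)))).
  assert (exp (- (k * (1 + x / k))) * (k ^ N * (1 + x / k) ^ N) <=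
          exp (- (k * (1 + x / k))) * (k ^ N * exp (INR N * (x / k)))).
  { apply Rmult_le_compat_l; [lra|]. apply Rmult_le_compat_l; lra. }
  eapply Rle_trans; [exact H2|]. right.
  replace (exp (- (k * (1 + x / k))) * (k ^ N * exp (INR N * (x / k)))) with
    (k ^ N * (exp (- (k * (1 + x / k))) * exp (INR N * (x / k)))) by ring.
  rewrite E. ring.
Qed.

Lemma Q_gap N :
  let k := INR (S N) in
  Q (S N) k - Q (S N) (k + 1) <=
  exp (- k) * k ^ N / INR (fact N) * k * (1 - exp (- (1 / k))).
Proof.
  intros k. assert (Hk : 0 < k) by (apply lt_0_INR; lia).
  set (C := exp (- k) * k ^ N / INR (fact N)).
  pose proof (fact_pos' N).
  assert (Q (S N) (k + 0) - C * k * exp (- (0 / k)) <= Q (S N) (k + 1) - C * k * exp (- (1 / k))).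
  { apply (mono_le (fun x => Q (S N) (k + x) - C * k * exp (- (x / k)))
      (fun x => - exp (- (k + x)) * ((k + x) ^ N / INR (fact N)) + C * exp (- (x / k)))); [lra| |].
    - intros x _.
      eapply dext; [intros; reflexivity| |].
      2: { apply dplus.
           - apply (dcomp (Q (S N)) (fun t => k + t) x 1). auto_derive; auto. apply Q_deriv.
           - apply (is_derive_opp (fun t => C * k * exp (- (t / k)))). auto_derive; auto. }
      unfold opp; simpl. unfold Rdiv. field. lra.
    - intros x Hx. pose proof (step_bound N x ltac:(lra)). fold k in H0.
      unfold C. 
      assert (exp (- (k + x)) * ((k + x) ^ N / INR (fact N)) <= exp (- k) * k ^ N / INR (fact N) * exp (- (x / k))).
      { unfold Rdiv. rewrite <- Rmult_assoc.
        replace (exp (- k) * k ^ N * / INR (fact N) * exp (- (x * / k))) with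
         (exp (- k) * k ^ N * exp (- (x * / k)) * / INR (fact N)) by ring.
        apply Rmult_le_compat_r. left; apply Rinv_0_lt_compat; auto. exact H0. }
      lra. }
  rewrite Rplus_0_r in H0. replace (0 / k) with 0 in H0 by (field; lra).
  rewrite Ropp_0, exp_0 in H0. lra.
Qed.

Lemma Q_B N : Q (S N) (INR (S N)) <= Q (S (S N)) (INR (S (S N))).
Proof.
  pose proof (Q_gap N) as G. cbv zeta in G.
  set (k := INR (S N)) in *.
  assert (Hk1 : 1 <= k) by (unfold k; rewrite S_INR; pose proof (pos_INR N); lra).
  replace (INR (S (S N))) with (k + 1) by (unfold k; rewrite (S_INR (S N)); ring).
  assert (EQ : Q (S (S N)) (k + 1) = Q (S N) (k + 1) + exp (- (k + 1)) * ((k + 1) ^ S N / INR (fact (S N)))).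
  { unfold Q. change (Qsum (S (S N)) (k+1)) with (Qsum (S N) (k+1) + (k+1)^(S N)/INR(fact (S N))). ring. }
  rewrite EQ.
  set (y := 1 / k) in *.
  assert (Hy : 0 < y <= 1). { unfold y; split. apply Rdiv_lt_0_compat; lra. apply (Rmult_le_reg_r k); [lra|]. unfold Rdiv. field_simplify; lra. }
  assert (Hky : k * y = 1) by (unfold y; field; lra).
  set (u := 1 - y / 2 + y ^ 2 / 6).
  assert (Hu0 : 0 < u) by (unfold u; nra).
  assert (Hu : u ^ 2 * (1 + y) <= 1).
  { unfold u. assert (0 <= 5/12 * y^2 * (1 - y) + y^4 * (5 - y) / 36).
    { assert (0 <= y^2) by nra. assert (0 <= y^4) by (apply pow_le; lra). nra. }
    nra. }
  set (P := (1 + y) ^ S N).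
  assert (HP0 : 0 < P) by (apply pow_lt; lra).
  assert (HP : exp 1 * exp 1 <= P ^ 2 * (1 + y)).
  { assert (E1 : P ^ 2 * (1 + y) = (1 + y) ^ (2 * S N + 1)).
    { unfold P. rewrite pow_add, pow_1, (Nat.mul_comm 2), pow_mult. reflexivity. }
    rewrite E1. rewrite <- (exp_ln ((1 + y) ^ (2 * S N + 1))) by (apply pow_lt; lra).
    rewrite <- exp_plus.
    assert (H2 : 1 + 1 <= ln ((1 + y) ^ (2 * S N + 1))).
    { rewrite ln_pow by lra. pose proof (ln_lb y ltac:(lra)) as H.
      replace (INR (2 * S N + 1)) with (2 * k + 1) by (unfold k; rewrite plus_INR, mult_INR; simpl (INR 2); simpl (INR 1); ring).
      replace (2 * y / (2 + y)) with (2 / (2 * k + 1)) in H by (unfold y; field; lra).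
      apply (Rmult_le_compat_l (2 * k + 1)) in H; [|lra].
      replace ((2 * k + 1) * (2 / (2 * k + 1))) with 2 in H by (field; lra). lra. }
    destruct (Rle_lt_or_eq_dec _ _ H2) as [H|H].
    - left. apply exp_increasing. exact H.
    - right. rewrite H. reflexivity. }
  assert (Hue : u * exp 1 <= P).
  { pose proof (exp_pos 1).
    assert ((u * exp 1) ^ 2 <= P ^ 2).
    { apply (Rmult_le_reg_r (1 + y)); [lra|].
      replace ((u * exp 1) ^ 2 * (1 + y)) with (u ^ 2 * (1 + y) * (exp 1 * exp 1)) by ring.
      assert (0 < exp 1 * exp 1) by nra. nra. }
    assert (0 < u * exp 1) by nra. nra. }
  assert (Hexp : 1 - exp (- y) <= y * u) by (pose proof (expm_lb y ltac:(lra)); unfold u; nra).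
  assert (Hku : k * (1 - exp (- y)) <= u).
  { apply (Rmult_le_compat_l k) in Hexp; [|lra]. replace (k * (y * u)) with u in Hexp by (rewrite <- Rmult_assoc, Hky; ring). exact Hexp. }
  assert (R1 : (k + 1) ^ S N = k ^ N * k * P).
  { unfold P. replace (k + 1) with (k * (1 + y)) by (rewrite Rmult_plus_distr_l, Hky; ring).
    rewrite Rpow_mult_distr. simpl pow. ring. }
  assert (R2 : INR (fact (S N)) = k * INR (fact N)) by (rewrite fact_simpl, mult_INR; reflexivity).
  assert (R3 : exp (- (k + 1)) = exp (- k) / exp 1).
  { rewrite Ropp_plus_distr, exp_plus, (exp_Ropp 1). reflexivity. }
  rewrite R1, R2, R3.
  set (D := exp (- k) * k ^ N / INR (fact N)).
  assert (HD : 0 <= D).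
  { unfold D. pose proof (fact_pos' N). pose proof (exp_pos (- k)). assert (0 <= k ^ N) by (apply pow_le; lra).
    apply Rmult_le_pos; [nra| left; apply Rinv_0_lt_compat; lra]. }
  assert (E : exp (- k) / exp 1 * (k ^ N * k * P / (k * INR (fact N))) = D * (P / exp 1)).
  { unfold D. pose proof (fact_pos' N). pose proof (exp_pos 1). field. split; lra. }
  rewrite E.
  assert (D * k * (1 - exp (- y)) <= D * (P / exp 1)).
  { rewrite Rmult_assoc. apply Rmult_le_compat_l; auto.
    pose proof (exp_pos 1). apply Rle_trans with u; auto.
    apply (Rmult_le_reg_r (exp 1)); auto. unfold Rdiv. rewrite Rmult_assoc, Rinv_l by lra. lra. }
  fold D in G. lra.
Qed.

Section Shape.
Variable N : nat.
Let K := INR (S N).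
Let K1 := INR (S (S N)).
Definition hh t := Q (S (S N)) (K1 * t) - Q (S N) (K * t).
Definition AA t := K * (exp (- (K * t)) * ((K * t) ^ N / INR (fact N))).
Definition BB t := K1 * (exp (- (K1 * t)) * ((K1 * t) ^ S N / INR (fact (S N)))).

Lemma hh_deriv t : is_derive hh t (AA t - BB t).
Proof.
  unfold hh, AA, BB.
  eapply dext; [intros; reflexivity| |].
  2: { apply dplus.
       - apply (dcomp (Q (S (S N))) (fun x => K1 * x) t K1). auto_derive; auto. ring. apply Q_deriv.
       - apply (is_derive_opp (fun x => Q (S N) (K * x))).
         apply (dcomp (Q (S N)) (fun x => K * x) t K). auto_derive; auto. ring. apply Q_deriv. }
  unfold opp; simpl. ring.
Qed.

Lemma BB_AA t : 0 <= t -> BB t = AA t * ((K1 / K) ^ S (S N) * (t * exp (- t))).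
Proof.
  intros Ht. unfold AA, BB.
  assert (HK : 0 < K) by (apply lt_0_INR; lia).
  assert (HK1 : K1 = K + 1) by (unfold K1, K; rewrite (S_INR (S N)); ring).
  rewrite fact_simpl, mult_INR. fold K.
  assert (E : exp (- (K1 * t)) = exp (- (K * t)) * exp (- t)).
  { rewrite <- exp_plus. f_equal. rewrite HK1. ring. }
  rewrite E. pose proof (fact_pos' N).
  rewrite !Rpow_mult_distr. unfold Rdiv. rewrite Rpow_mult_distr, pow_inv.
  assert (K ^ N <> 0) by (apply pow_nonzero; lra). simpl pow. field. repeat split; lra.
Qed.

Lemma w_incr a b : 0 <= a <= b -> b <= 1 -> a * exp (- a) <= b * exp (- b).
Proof.
  intros H1 H2.
  apply (mono_le (fun t => t * exp (- t)) (fun t => (1 - t) * exp (- t))); [lra| |].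
  - intros x _. auto_derive; auto. ring.
  - intros x Hx. apply Rmult_le_pos; [lra| left; apply exp_pos].
Qed.

Lemma AA_nonneg t : 0 <= t -> 0 <= AA t.
Proof.
  intros Ht. unfold AA.
  assert (HK : 0 < K) by (apply lt_0_INR; lia). pose proof (fact_pos' N).
  apply Rmult_le_pos; [lra|]. apply Rmult_le_pos; [left; apply exp_pos|].
  apply Rmult_le_pos; [apply pow_le; nra| left; apply Rinv_0_lt_compat; lra].
Qed.

Lemma hh_nonneg t : 0 <= t <= 1 -> 0 <= hh t.
Proof.
  intros Ht. set (c := (K1 / K) ^ S (S N)).
  assert (Hc : 0 <= c).
  { unfold c. apply pow_le. apply Rdiv_le_0_compat; [apply pos_INR | apply lt_0_INR; lia]. }
  destruct (Rle_lt_dec (c * (t * exp (- t))) 1) as [Hle|Hgt].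
  - assert (hh 0 <= hh t).
    { apply (mono_le hh (fun s => AA s - BB s)); [lra| intros; apply hh_deriv |].
      intros s Hs. rewrite (BB_AA s) by lra. fold c.
      pose proof (w_incr s t ltac:(lra) ltac:(lra)).
      pose proof (AA_nonneg s ltac:(lra)).
      assert (c * (s * exp (- s)) <= 1) by nra. nra. }
    unfold hh in *. rewrite !Rmult_0_r, !Q0 in H. lra.
  - assert (hh 1 <= hh t).
    { assert (- hh t <= - hh 1); [|lra].
      apply (mono_le (fun s => - hh s) (fun s => BB s - AA s)); [lra| |].
      + intros s _. eapply dext; [intros; reflexivity| |].
        2: { apply (is_derive_opp hh). apply hh_deriv. }
        unfold opp; simpl. ring.
      + intros s Hs. rewrite (BB_AA s) by lra. fold c.
        pose proof (w_incr t s ltac:(lra) ltac:(lra)).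
        pose proof (AA_nonneg s ltac:(lra)).
        assert (1 <= c * (s * exp (- s))) by nra. nra. }
    pose proof (Q_B N). unfold hh in *. rewrite !Rmult_1_r in H. fold K K1 in H0. lra.
Qed.
End Shape.

Lemma Qinv_spec N b : 1 / 2 <= b -> b < 1 ->
  0 < Qinv (S N) b /\ Q (S N) (Qinv (S N) b) = b.
Proof.
  intros H1 H2. unfold Qinv. apply epsilon_spec.
  set (K := INR (S N)). assert (HK : 0 < K) by (apply lt_0_INR; lia).
  pose proof (Q_half N) as Hh. fold K in Hh.
  destruct (IVT (fun l => b - Q (S N) l) 0 K) as [z [Hz Ez]].
  - intros l. apply (der_cont _ (fun l => exp (- l) * (l ^ N / INR (fact N)))).
    eapply dext; [intros; reflexivity| |].
    2: { apply dplus. apply is_derive_const. apply (is_derive_opp (Q (S N))). apply Q_deriv. }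
    unfold opp, plus, zero; simpl. ring.
  - exact HK.
  - cbv beta. rewrite Q0. lra.
  - cbv beta. lra.
  - exists z. destruct (Req_dec z 0) as [->|Hz0].
    + rewrite Q0 in Ez. lra.
    + split; lra.
Qed.

Theorem lemma10 (beta : R) (k : nat) :
  1 / 2 <= beta -> beta < 1 -> (2 <= k)%nat ->
  Qinv k beta <= INR k / INR (k + 1) * Qinv (k + 1) beta.
Proof.
  intros H1 H2 Hk.
  destruct k as [|N]; [lia|].
  rewrite Nat.add_1_r.
  destruct (Qinv_spec N beta H1 H2) as [Hx Ex].
  destruct (Qinv_spec (S N) beta H1 H2) as [Hy Ey].
  set (x := Qinv (S N) beta) in *. set (y := Qinv (S (S N)) beta) in *.
  set (K := INR (S N)). set (K1 := INR (S (S N))).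
  assert (HK : 0 < K) by (apply lt_0_INR; lia).
  assert (HK1 : K1 = K + 1) by (unfold K1, K; rewrite (S_INR (S N)); ring).
  set (t := x / K).
  assert (Ht0 : 0 <= t) by (unfold t; apply Rdiv_le_0_compat; lra).
  assert (Ht1 : t <= 1).
  { destruct (Rle_lt_dec t 1) as [|H]; auto.
    assert (K < x) by (unfold t in H; apply (Rmult_lt_compat_r K) in H; [|lra];
      replace (x / K * K) with x in H by (field; lra); lra).
    pose proof (Q_nonincr N K x ltac:(lra)) as Ha. pose proof (Q_half N) as Hb. fold K in Hb. lra. }
  pose proof (hh_nonneg N t (conj Ht0 Ht1)) as Hh. unfold hh in Hh. fold K K1 in Hh.
  replace (K * t) with x in Hh by (unfold t; field; lra).
  assert (K1 * t <= y).
  { destruct (Rle_lt_dec (K1 * t) y) as [|H]; auto.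
    pose proof (Q_decr (S N) y (K1 * t) ltac:(lra)). lra. }
  replace x with (K * t) by (unfold t; field; lra).
  apply (Rmult_le_compat_l (K / K1)) in H; [|apply Rdiv_le_0_compat; lra].
  replace (K / K1 * (K1 * t)) with (K * t) in H by (field; lra).
  exact H.
Qed.
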